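(* Let $f:\{-1,1\}^n\to\mathbb{R}$, $f=\sum_{S\subseteq[n]}c_S\chi_S$, be approximately $(s,\nu)$-sparse with respect to $\mathcal{I}\subseteq2^{[n]}$, $|\mathcal{I}|=s$, and let $f_{\mathcal{I}}=\sum_{S\in\mathcal{I}}c_S\chi_S$. Suppose samples $\mathbf{x}_i\in\{-1,1\}^n$ are observed as $y_i=f(\mathbf{x}_i)+\varepsilon_i$ with $|\varepsilon_i|\le\epsilon$, and suppose any two distinct values of $f_{\mathcal{I}}$ differ by at least $4(\epsilon+\nu)$. Let $\eta=\max_i y_i$ over the drawn samples, and let $\mathbf{X}_{\max}$ consist of all drawn $\mathbf{x}_i$ with $|y_i-\eta|\le 2(\epsilon+\nu)$ (Algorithm MaxCluster). Then $\mathbf{X}_{\max}$ contains exactly those drawn inputs $\mathbf{x}_i$ at which $f_{\mathcal{I}}$ attains its maximum value among the drawn samples.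
   Context: $\chi_S(\mathbf{x})=\prod_{j\in S}x_j$. $f$ is approximately $(s,\nu)$-sparse with respect to $\mathcal{I}$ if $\sum_{S\notin\mathcal{I}}|c_S|<\nu$. *)

(* Defs.v *)
From mathcomp Require Import all_boot all_order all_algebra.
Set Implicit Arguments. Unset Strict Implicit. Unset Printing Implicit Defensive.
Import Order.TTheory GRing.Theory Num.Theory.
Local Open Scope ring_scope.

Section Defs.
Variables (R : realFieldType) (n : nat).

Definition in_cube (x : 'I_n -> R) : Prop := forall j, x j = 1 \/ x j = -1.

Definition chi (S : {set 'I_n}) (x : 'I_n -> R) : R := \prod_(j in S) x j.

Definition fourier (c : {set 'I_n} -> R) (x : 'I_n -> R) : R :=
  \sum_(S : {set 'I_n}) c S * chi S x.

Definition fourier_on (I : {set {set 'I_n}}) (c : {set 'I_n} -> R)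
  (x : 'I_n -> R) : R := \sum_(S in I) c S * chi S x.

Definition approx_sparse (s : nat) (nu : R) (I : {set {set 'I_n}})
  (c : {set 'I_n} -> R) : Prop :=
  #|I| = s /\ \sum_(S | S \notin I) `|c S| < nu.
End Defs.

Definition fmax (R : realFieldType) (m : nat) (hm : (0 < m)%N) (v : 'I_m -> R) : R :=
  \big[Num.max/v (Ordinal hm)]_(i < m) v i.

Definition max_cluster (R : realFieldType) (m : nat) (hm : (0 < m)%N)
  (y : 'I_m -> R) (eps nu : R) : {set 'I_m} :=
  [set i | `|y i - fmax hm y| <= 2 * (eps + nu)].

(* Main.v *)
Require Import Defs.
From mathcomp Require Import all_boot all_order all_algebra.
From mathcomp Require Import lra.
Import Order.TTheory GRing.Theory Num.Theory.
Local Open Scope ring_scope.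

Lemma fmax_ge (R : realFieldType) m (hm : (0 < m)%N) (v : 'I_m -> R) i :
  v i <= fmax hm v.
Proof.
rewrite /fmax (bigD1 i) //= /Order.max.
by case: ifP => [/ltW|_] //; rewrite lexx.
Qed.

Lemma fmax_ex (R : realFieldType) m (hm : (0 < m)%N) (v : 'I_m -> R) :
  exists i, fmax hm v = v i.
Proof.
rewrite /fmax; apply: (big_ind (fun x => exists i, x = v i)).
- by exists (Ordinal hm).
- move=> a b [i ->] [j ->]; rewrite /Order.max.
  by case: ifP => _; [exists j | exists i].
- by move=> i _; exists i.
Qed.

Lemma chi_norm (R : realFieldType) n (S : {set 'I_n}) (x : 'I_n -> R) :
  in_cube x -> `|chi S x| = 1.
Proof.
move=> hx; rewrite /chi normr_prod; apply: big1 => j _.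
by case: (hx j) => ->; rewrite ?normrN normr1.
Qed.

Lemma approx_err (R : realFieldType) n (c : {set 'I_n} -> R) I x :
  in_cube x ->
  `|fourier c x - fourier_on I c x| <= \sum_(S | S \notin I) `|c S|.
Proof.
move=> hx; rewrite /fourier /fourier_on (bigID (fun S => S \in I)) /=.
rewrite addrC addrK; apply: le_trans (ler_norm_sum _ _ _) _.
by apply: ler_sum => S _; rewrite normrM chi_norm // mulr1.
Qed.

Theorem lemma3 (R : realFieldType) (n s m : nat) (hm : (0 < m)%N)
  (c : {set 'I_n} -> R) (I : {set {set 'I_n}}) (nu eps : R)
  (xs : 'I_m -> 'I_n -> R) (e y : 'I_m -> R) :
  approx_sparse s nu I c ->
  (forall i, in_cube (xs i)) ->
  (forall i, `|e i| <= eps) ->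
  (forall i, y i = fourier c (xs i) + e i) ->
  (forall x x' : 'I_n -> R, in_cube x -> in_cube x' ->
     fourier_on I c x != fourier_on I c x' ->
     4 * (eps + nu) <= `|fourier_on I c x - fourier_on I c x'|) ->
  max_cluster hm y eps nu =
  [set i | fourier_on I c (xs i) == fmax hm (fun k => fourier_on I c (xs k))].
Proof.
move=> [_ hnu] hcube he hy hsep.
set g := fun k => fourier_on I c (xs k).
have hd : forall i, `|y i - g i| < eps + nu.
  move=> i; rewrite hy /g.
  have h1 := approx_err _ _ c I _ (hcube i).
  have h2 := he i.
  rewrite addrAC; apply: le_lt_trans (ler_normD _ _) _.
  rewrite [eps + nu]addrC; apply: ltr_leD => //; apply: le_lt_trans h1 hnu.
have hdl : forall i, g i - (eps + nu) < y i.
  by move=> i; have := hd i; rewrite ltr_norml => /andP[h1 h2]; lra.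
have hdr : forall i, y i < g i + (eps + nu).
  by move=> i; have := hd i; rewrite ltr_norml => /andP[h1 h2]; lra.
have [i0 hMs] := fmax_ex _ _ hm g.
have [j hej] := fmax_ex _ _ hm y.
set M := fmax hm g in hMs *.
set eta := fmax hm y in hej *.
have etaL : M - (eps + nu) < eta.
  by apply: lt_le_trans (fmax_ge _ _ hm y i0); rewrite hMs.
have etaU : eta < M + (eps + nu).
  by rewrite hej; apply: lt_le_trans (hdr j) _; rewrite lerD2r fmax_ge.
apply/setP => i; rewrite /max_cluster !inE -/eta -/(g i).
have yle : y i <= eta by apply: fmax_ge.
rewrite ler0_norm ?subr_le0 // opprB.
have gle : g i <= M by apply: fmax_ge.
clearbody M eta.
have h3 := hdr i; have h6 := hdl i.
case: (eqVneq (g i) M) => hgi.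
- rewrite -hgi in etaU; apply: ltW; lra.
- have : 4 * (eps + nu) <= `|g i0 - g i|.
    by apply: hsep (hcube i0) (hcube i) _; rewrite -/(g i0) -hMs eq_sym.
  rewrite -hMs ger0_norm ?subr_ge0 // => h4.
  apply/negbTE; rewrite -ltNge; lra.
Qed.
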